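(* Let $R>0$ and let $\mathbf L\colon \mathbb R^n\times\mathbb R^m\to\mathbb R$ be an $R$-smooth convex-concave function that has a saddle point $\mathbf z^\star$. Let $\alpha>0$ satisfy $$1-3\alpha R-\alpha^2R^2-\alpha^3R^3\ge 0\quad\text{and}\quad 1-8\alpha R+\alpha^2R^2-2\alpha^3R^3\ge 0.$$ Let $\mathbf z^0\in\mathbb R^n\times\mathbb R^m$ be arbitrary, and define for $k\ge 0$ the EAG-C iterates $$\mathbf z^{k+1/2}=\mathbf z^k+\tfrac{1}{k+2}(\mathbf z^0-\mathbf z^k)-\alpha\,\mathbf G(\mathbf z^k),\qquad \mathbf z^{k+1}=\mathbf z^k+\tfrac{1}{k+2}(\mathbf z^0-\mathbf z^k)-\alpha\,\mathbf G(\mathbf z^{k+1/2}).$$ Then for all $k\ge 0$, $$\|\nabla\mathbf L(\mathbf z^k)\|^2\le \frac{4(1+\alpha R+\alpha^2R^2)}{\alpha^2(1+\alpha R)}\,\frac{\|\mathbf z^0-\mathbf z^\star\|^2}{(k+1)^2}.$$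
   Context: Write $\mathbf z=(\mathbf x,\mathbf y)\in\mathbb R^n\times\mathbb R^m$. $\mathbf L$ is convex-concave if $\mathbf L(\cdot,\mathbf y)$ is convex for each $\mathbf y$ and $\mathbf L(\mathbf x,\cdot)$ is concave for each $\mathbf x$. A saddle point $(\mathbf x^\star,\mathbf y^\star)$ satisfies $\mathbf L(\mathbf x^\star,\mathbf y)\le\mathbf L(\mathbf x^\star,\mathbf y^\star)\le\mathbf L(\mathbf x,\mathbf y^\star)$ for all $\mathbf x,\mathbf y$. For differentiable $\mathbf L$, the saddle operator is $\mathbf G(\mathbf z)=(\nabla_{\mathbf x}\mathbf L(\mathbf x,\mathbf y),-\nabla_{\mathbf y}\mathbf L(\mathbf x,\mathbf y))$. $\mathbf L$ is $R$-smooth if $\mathbf L$ is differentiable and $\mathbf G$ is $R$-Lipschitz continuous. Note $\|\nabla\mathbf L(\mathbf z)\|=\|\mathbf G(\mathbf z)\|$. *)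

(* Defs.v *)
From HB Require Import structures.
From mathcomp Require Import all_boot all_order all_algebra.
From mathcomp Require Import all_classical all_reals all_analysis.
Set Implicit Arguments. Unset Strict Implicit. Unset Printing Implicit Defensive.
Import Order.TTheory GRing.Theory Num.Theory.
Import numFieldNormedType.Exports.
Local Open Scope ring_scope.

(* Points z = (x, y) of R^n x R^m are encoded as row vectors 'rV_(n+m),
   x = lsubmx z, y = rsubmx z, z = row_mx x y. *)

Definition enorm (R : realType) (N : nat) (v : 'rV[R]_N) : R :=
  Num.sqrt (\sum_(i < N) v 0 i ^+ 2).

Definition grad (R : realType) (N : nat) (f : 'rV[R]_N -> R) (z : 'rV[R]_N)
  : 'rV[R]_N := \row_(i < N) 'D_(delta_mx 0 i) f z.

Definition saddle_op (R : realType) (n m : nat) (L : 'rV[R]_(n + m) -> R)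
  (z : 'rV[R]_(n + m)) : 'rV[R]_(n + m) :=
  row_mx (lsubmx (grad L z)) (- rsubmx (grad L z)).

Definition convex_concave (R : realType) (n m : nat) (L : 'rV[R]_(n + m) -> R)
  : Prop :=
  (forall (y : 'rV[R]_m) (x1 x2 : 'rV[R]_n) (t : R), 0 <= t <= 1 ->
     L (row_mx (t *: x1 + (1 - t) *: x2) y)
       <= t * L (row_mx x1 y) + (1 - t) * L (row_mx x2 y)) /\
  (forall (x : 'rV[R]_n) (y1 y2 : 'rV[R]_m) (t : R), 0 <= t <= 1 ->
     t * L (row_mx x y1) + (1 - t) * L (row_mx x y2)
       <= L (row_mx x (t *: y1 + (1 - t) *: y2))).

Definition smooth_cc (R : realType) (n m : nat) (Rs : R)
  (L : 'rV[R]_(n + m) -> R) : Prop :=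
  (forall z, differentiable L z) /\
  (forall z w, enorm (saddle_op L z - saddle_op L w) <= Rs * enorm (z - w)).

Definition saddle_point (R : realType) (n m : nat) (L : 'rV[R]_(n + m) -> R)
  (zs : 'rV[R]_(n + m)) : Prop :=
  forall (x : 'rV[R]_n) (y : 'rV[R]_m),
    L (row_mx (lsubmx zs) y) <= L zs /\ L zs <= L (row_mx x (rsubmx zs)).

Fixpoint eagc (R : realType) (n m : nat) (L : 'rV[R]_(n + m) -> R) (alpha : R)
  (z0 : 'rV[R]_(n + m)) (k : nat) : 'rV[R]_(n + m) :=
  match k with
  | 0%N => z0
  | k'.+1 =>
      let zk := eagc L alpha z0 k' in
      let zh := zk + (k'.+2%:R)^-1 *: (z0 - zk) - alpha *: saddle_op L zk in
      zk + (k'.+2%:R)^-1 *: (z0 - zk) - alpha *: saddle_op L zh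
  end.

(* Main.v *)
Require Import Defs.
From HB Require Import structures.
From mathcomp Require Import all_boot all_order all_algebra.
From mathcomp Require Import all_classical all_reals all_analysis.
From mathcomp Require Import ring lra.
Import Order.TTheory GRing.Theory Num.Theory.
Import numFieldNormedType.Exports.
Local Open Scope ring_scope.

Lemma D_le (R : realType) (N : nat) (f : 'rV[R]_N -> R) z v c :
  derivable f z v -> (forall h : R, 0 < h < 1 -> f (h *: v + z) - f z <= h * c) ->
  'D_v f z <= c.
Proof.
move=> df H.
have H1 := cvg_dnbhs_at_right df.
apply: (cvgr_to_le H1).
near=> h.
have h0 : 0 < h by near: h; exact: nbhs_right_gt.
have h1 : h < 1 by near: h; exact: nbhs_right_lt.
rewrite /= /shift.
have := H h; rewrite h0 h1 => /(_ isT) Hh.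
rewrite -[X in _ <= X](mulKf (lt0r_neq0 h0)).
rewrite [_ *: _]/(_ * _).
by rewrite ler_pM2l ?invr_gt0.
Unshelve. all: by end_near. Qed.

Lemma D_ge (R : realType) (N : nat) (f : 'rV[R]_N -> R) z v c :
  derivable f z v -> (forall h : R, 0 < h < 1 -> h * c <= f (h *: v + z) - f z) ->
  c <= 'D_v f z.
Proof.
move=> df H.
have H1 := cvg_dnbhs_at_right df.
apply: (cvgr_to_ge H1).
near=> h.
have h0 : 0 < h by near: h; exact: nbhs_right_gt.
have h1 : h < 1 by near: h; exact: nbhs_right_lt.
rewrite /= /shift.
have := H h; rewrite h0 h1 => /(_ isT) Hh.
rewrite -[X in X <= _](mulKf (lt0r_neq0 h0)).
rewrite [_ *: _]/(_ * _).
by rewrite ler_pM2l ?invr_gt0.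
Unshelve. all: by end_near. Qed.

Definition dot (R : realType) (N : nat) (u v : 'rV[R]_N) : R :=
  \sum_i u 0 i * v 0 i.
Arguments dot {R N}.

Lemma Dsum (R : realType) (N : nat) (f : 'rV[R]_N -> R) z v :
  differentiable f z -> 'D_v f z = dot v (grad f z).
Proof.
move=> df.
rewrite deriveE // {1}(row_sum_delta v) linear_sum.
apply: eq_bigr => i _.
by rewrite linearZ /= mxE deriveE.
Qed.

Lemma dot_row_mx (R : realType) (n m : nat) (a c : 'rV[R]_n) (b d : 'rV[R]_m) :
  dot (row_mx a b) (row_mx c d) = dot a c + dot b d.
Proof.
by rewrite /dot big_split_ord /=; congr (_ + _); apply: eq_bigr => i _;
  rewrite ?row_mxEl ?row_mxEr.
Qed.

Lemma dot0l (R : realType) (n : nat) (a : 'rV[R]_n) : dot 0 a = 0.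
Proof. by rewrite /dot big1 // => i _; rewrite mxE mul0r. Qed.

Lemma dotNl (R : realType) (n : nat) (a b : 'rV[R]_n) : dot (- a) b = - dot a b.
Proof. by rewrite /dot -sumrN; apply: eq_bigr => i _; rewrite mxE mulNr. Qed.

Lemma dotNr (R : realType) (n : nat) (a b : 'rV[R]_n) : dot a (- b) = - dot a b.
Proof. by rewrite /dot -sumrN; apply: eq_bigr => i _; rewrite mxE mulrN. Qed.

Lemma dotC (R : realType) (n : nat) (a b : 'rV[R]_n) : dot a b = dot b a.
Proof. by apply: eq_bigr => i _; rewrite mulrC. Qed.

Lemma grad_ineq (R : realType) (n m : nat) (L : 'rV[R]_(n + m) -> R) z w :
  (forall z, differentiable L z) -> convex_concave L ->
  L (row_mx (lsubmx z) (rsubmx w)) - L (row_mx (lsubmx w) (rsubmx z))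
    <= dot (saddle_op L z) (z - w).
Proof.
move=> dL [cvx ccv].
set x := lsubmx z; set y := rsubmx z; set x' := lsubmx w; set y' := rsubmx w.
have Ez : z = row_mx x y by rewrite hsubmxK.
have Ew : w = row_mx x' y' by rewrite hsubmxK.
have D1 : 'D_(row_mx (x' - x) 0) L z <= L (row_mx x' y) - L z.
  apply: D_le; first exact: diff_derivable.
  move=> h /andP[h0 h1].
  have -> : h *: row_mx (x' - x) 0 + z = row_mx (h *: x' + (1 - h) *: x) y.
    rewrite [X in _ + X = _]Ez scale_row_mx add_row_mx scaler0 add0r; congr row_mx.
    by rewrite scalerBr scalerBl scale1r -addrA (addrC (- _)).
  have := cvx y x' x h; rewrite (ltW h0) (ltW h1) => /(_ isT).
  rewrite -Ez => H; rewrite mulrBr; lra.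
have D2 : L (row_mx x y') - L z <= 'D_(row_mx 0 (y' - y)) L z.
  apply: D_ge; first exact: diff_derivable.
  move=> h /andP[h0 h1].
  have -> : h *: row_mx 0 (y' - y) + z = row_mx x (h *: y' + (1 - h) *: y).
    rewrite [X in _ + X = _]Ez scale_row_mx add_row_mx scaler0 add0r; congr row_mx.
    by rewrite scalerBr scalerBl scale1r -addrA (addrC (- _)).
  have := ccv x y' y h; rewrite (ltW h0) (ltW h1) => /(_ isT).
  rewrite -Ez => H; rewrite mulrBr; lra.
rewrite !Dsum // -[grad L z]hsubmxK !dot_row_mx !dot0l add0r addr0 in D1 D2.
have -> : z - w = row_mx (x - x') (y - y').
  by rewrite {1}Ez {1}Ew opp_row_mx add_row_mx.
rewrite /saddle_op dot_row_mx dotNl.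
have E1 : dot (lsubmx (grad L z)) (x - x') = - dot (lsubmx (grad L z)) (x' - x).
  by rewrite -dotNr opprB.
have E2 : dot (rsubmx (grad L z)) (y - y') = - dot (rsubmx (grad L z)) (y' - y).
  by rewrite -dotNr opprB.
rewrite E1 E2.
rewrite (@dotC _ _ (x' - x)) in D1; rewrite (@dotC _ _ (y' - y)) in D2.
lra.
Qed.
Lemma Q3_nonneg (R : realFieldType) (b s g h g' : R) :
  0 <= b -> 0 <= s -> s <= 1/49 ->
  0 <= (b+1)*(4*(b+1)+1)/8 * g^+2 - (b+2)*(4*(b+2)+1)/8 * g'^+2
       + (b+2)^+2*g'*h - (b+1)*(b+2)*g*h - (b+2)^+2*s*(g-h)^+2
       + (b+2)^+2*(g'-h)^+2.
Proof.
move=> b0 s0 s1.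
set Q := (X in 0 <= X).
pose u := b+2.
pose c := u^+2 - u*(4*u+1)/8.
pose A := (b+1)*(4*(b+1)+1)/8.
pose X := 4*c*(A - u^+2*s).
pose Y := 4*c*(2*u^+2*s - (b+1)*u).
pose Z := 4*c*u^+2*(1-s) - u^+4.
have Ec : c = 7/4 + 15/8*b + b^+2/2 by rewrite /c /u; field.
have c0 : 0 < c by rewrite Ec; nra.
have EA : A - u^+2*s = (b+1)*(4*(b+1)+1)/8 - (b+2)^+2 * s by [].
have A0 : 0 < A - u^+2*s.
  rewrite EA.
  have : (b+2)^+2 * s <= (b+2)^+2 / 49.
    by rewrite ler_pM2l ?exprn_gt0 //; lra.
  nra.
have X0 : 0 < X by rewrite /X; apply: mulr_gt0 => //; apply: mulr_gt0.
have ED : 4*X*Z - Y^+2 =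
   (14 + 50*b + 73*b^+2 + 56*b^+3 + 191/8*b^+4 + 43/8*b^+5 + 1/2*b^+6)
   - s * (266 + 838*b + 1099*b^+2 + 768*b^+3 + 2413/8*b^+4 + 505/8*b^+5 + 11/2*b^+6).
  by rewrite /X /Y /Z /c /A /u; field.
have D0 : 0 <= 4*X*Z - Y^+2.
  rewrite ED.
  set D1 := (266 + 838*b + _ + _ + _ + _ + _).
  have h2 := exprn_ge0 2 b0; have h3 := exprn_ge0 3 b0; have h4 := exprn_ge0 4 b0.
  have h5 := exprn_ge0 5 b0; have h6 := exprn_ge0 6 b0.
  have D1p : 0 <= D1 by rewrite /D1; lra.
  have E : 0 <= 420 + 1612*b + 2478*b^+2 + 1976*b^+3 + 3473/4*b^+4 + 801/4*b^+5 + 19*b^+6.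
    lra.
  have : s * D1 <= D1 / 49.
    rewrite mulrC; apply: ler_wpM2l => //; lra.
  rewrite /D1 => H.
  lra.
have key : 16*c*X*Q = 4*X*(2*c*g' - u^+2*h)^+2 + (2*X*g+Y*h)^+2 + (4*X*Z-Y^+2)*h^+2.
  by rewrite /Q /X /Y /Z /c /A /u; field.
have P : 0 <= 16*c*X*Q.
  rewrite key; apply: addr_ge0; first apply: addr_ge0.
  - by apply: mulr_ge0; [apply: mulr_ge0; [|apply: ltW]|apply: sqr_ge0].
  - exact: sqr_ge0.
  - by apply: mulr_ge0; [|apply: sqr_ge0].
by move: P; rewrite pmulr_rge0 // !mulr_gt0.
Qed.

Lemma dot_ge0 (R : realType) (n : nat) (a : 'rV[R]_n) : 0 <= dot a a.
Proof. by apply: sumr_ge0 => i _; rewrite -expr2 sqr_ge0. Qed.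

Lemma enorm_sq (R : realType) (n : nat) (a : 'rV[R]_n) : enorm a ^+ 2 = dot a a.
Proof.
rewrite /enorm sqr_sqrtr //; apply: sumr_ge0 => i _; exact: sqr_ge0.
Qed.

Lemma dot_G (R : realType) (n m : nat) (L : 'rV[R]_(n + m) -> R) z :
  dot (saddle_op L z) (saddle_op L z) = dot (grad L z) (grad L z).
Proof.
by rewrite /saddle_op dot_row_mx dotNl dotNr opprK -dot_row_mx hsubmxK.
Qed.

Lemma dot_eq0 (R : realType) (n : nat) (a : 'rV[R]_n) : dot a a = 0 -> a = 0.
Proof.
move=> /eqP; rewrite psumr_eq0 => [/allP H|i _]; last by rewrite -expr2 sqr_ge0.
apply/rowP => i; rewrite mxE.
have := H i (mem_index_enum _); rewrite /= => /eqP/eqP.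
by rewrite mulf_eq0 orbb => /eqP.
Qed.

Lemma G_saddle0 (R : realType) (n m : nat) (L : 'rV[R]_(n + m) -> R) zs :
  (forall z, differentiable L z) -> saddle_point L zs -> saddle_op L zs = 0.
Proof.
move=> dL sp.
set gl := lsubmx (grad L zs); set gr := rsubmx (grad L zs).
have Ez : zs = row_mx (lsubmx zs) (rsubmx zs) by rewrite hsubmxK.
have Eg : grad L zs = row_mx gl gr by rewrite hsubmxK.
have DL : forall d : 'rV_n, 0 <= dot d gl.
  move=> d.
  have := @D_ge _ _ L zs (row_mx d 0) 0 (diff_derivable (dL zs)).
  rewrite Dsum // Eg dot_row_mx dot0l addr0; apply => h _.
  rewrite mulr0 subr_ge0.
  have -> : h *: row_mx d 0 + zs = row_mx (h *: d + lsubmx zs) (rsubmx zs).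
    by rewrite [X in _ + X]Ez scale_row_mx add_row_mx scaler0 add0r.
  by case: (sp (h *: d + lsubmx zs) 0).
have DR : forall e : 'rV_m, dot e gr <= 0.
  move=> e.
  have := @D_le _ _ L zs (row_mx 0 e) 0 (diff_derivable (dL zs)).
  rewrite Dsum // Eg dot_row_mx dot0l add0r; apply => h _.
  rewrite mulr0 subr_le0.
  have -> : h *: row_mx 0 e + zs = row_mx (lsubmx zs) (h *: e + rsubmx zs).
    by rewrite [X in _ + X]Ez scale_row_mx add_row_mx scaler0 add0r.
  by case: (sp 0 (h *: e + rsubmx zs)).
have gl0 : gl = 0.
  apply: dot_eq0; apply/eqP; rewrite eq_le dot_ge0 andbT.
  by have := DL (- gl); rewrite dotNl oppr_ge0.
have gr0 : gr = 0.
  apply: dot_eq0; apply/eqP; rewrite eq_le dot_ge0 andbT.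
  by apply: DR.
by rewrite /saddle_op -/gl -/gr gl0 gr0 oppr0 row_mx0.
Qed.

Lemma mono (R : realType) (n m : nat) (L : 'rV[R]_(n + m) -> R) z w :
  (forall z, differentiable L z) -> convex_concave L ->
  0 <= dot (saddle_op L z) (z - w) + dot (saddle_op L w) (w - z).
Proof.
move=> dL cc.
have := @grad_ineq _ _ _ L z w dL cc; have := @grad_ineq _ _ _ L w z dL cc; lra.
Qed.

Lemma at_sol (R : realType) (n m : nat) (L : 'rV[R]_(n + m) -> R) z zs :
  (forall z, differentiable L z) -> convex_concave L -> saddle_point L zs ->
  0 <= dot (saddle_op L z) (z - zs).
Proof.
move=> dL cc sp.
have := @grad_ineq _ _ _ L z zs dL cc.
have [H1 _] := sp (lsubmx z) (rsubmx z).
have [_ H2] := sp (lsubmx z) (rsubmx z).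
lra.
Qed.

Lemma lip_sq (R : realType) (n m : nat) (Rs : R) (L : 'rV[R]_(n + m) -> R) z w :
  smooth_cc Rs L ->
  dot (saddle_op L z - saddle_op L w) (saddle_op L z - saddle_op L w)
    <= Rs ^+ 2 * dot (z - w) (z - w).
Proof.
move=> [_ lip].
rewrite -!enorm_sq -exprMn.
have := lip z w.
have e0 : 0 <= enorm (saddle_op L z - saddle_op L w) by apply: sqrtr_ge0.
move=> H; rewrite ler_sqr //; last exact: le_trans H.

Qed.

Definition Ahat (R : realType) (b : R) : R := (b+1)*(4*(b+1)+1)/8.
Arguments Ahat {R}.

Definition Vk (R : realType) (n m : nat) (L : 'rV[R]_(n + m) -> R) (alpha : R)
  (z0 : 'rV[R]_(n + m)) (k : nat) : R :=
  alpha * Ahat k%:R * dot (saddle_op L (eagc L alpha z0 k)) (saddle_op L (eagc L alpha z0 k))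
  + (k%:R + 1) * dot (saddle_op L (eagc L alpha z0 k)) (eagc L alpha z0 k - z0).
Arguments Vk {R n m}.

Lemma descent (R : realType) (n m : nat) (Rs : R) (L : 'rV[R]_(n + m) -> R)
  (alpha : R) (z0 : 'rV[R]_(n + m)) :
  smooth_cc Rs L -> convex_concave L -> 0 < alpha -> (alpha * Rs) ^+ 2 <= 1/49 ->
  forall k, Vk L alpha z0 k.+1 <= Vk L alpha z0 k.
Proof.
move=> sm cc a0 small k.
have dL := sm.1.
set zk := eagc L alpha z0 k.
set b := (k%:R : R).
set beta := ((k.+2)%:R : R)^-1.
set g := saddle_op L zk.
set zh := zk + beta *: (z0 - zk) - alpha *: g.
set h := saddle_op L zh.
set zk1 := zk + beta *: (z0 - zk) - alpha *: h.
set g' := saddle_op L zk1.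
have E1 : eagc L alpha z0 k.+1 = zk1 by [].
have Eb1 : (k.+1)%:R = b + 1 :> R by rewrite -natr1.
have Eb2 : (k.+2)%:R = b + 2 :> R by rewrite -natr1 -natr1 -addrA.
have b0 : 0 <= b by rewrite /b ler0n.
have M : 0 <= dot g' (zk1 - zk) + dot g (zk - zk1) := @mono _ _ _ L zk1 zk dL cc.
have Lp : dot (g' - h) (g' - h) <= Rs ^+ 2 * dot (zk1 - zh) (zk1 - zh) := @lip_sq _ _ _ Rs L zk1 zh sm.
rewrite /Vk E1 -/zk -/g -/g' Eb1.
clearbody g' h g zk.
pose lam := (b + 1) * (b + 2).
pose tau := alpha * (b + 2) ^+ 2.
pose F (i : 'I_(n + m)) :=
  alpha * Ahat b * (g 0 i * g 0 i) + (b + 1) * (g 0 i * (zk - z0) 0 i)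
  - alpha * Ahat (b + 1) * (g' 0 i * g' 0 i) - (b + 1 + 1) * (g' 0 i * (zk1 - z0) 0 i)
  - lam * (g' 0 i * (zk1 - zk) 0 i) - lam * (g 0 i * (zk - zk1) 0 i)
  - tau * Rs ^+ 2 * ((zk1 - zh) 0 i * (zk1 - zh) 0 i) + tau * ((g' - h) 0 i * (g' - h) 0 i).
have SF : \sum_i F i =
  alpha * Ahat b * dot g g + (b + 1) * dot g (zk - z0)
  - alpha * Ahat (b + 1) * dot g' g' - (b + 1 + 1) * dot g' (zk1 - z0)
  - lam * dot g' (zk1 - zk) - lam * dot g (zk - zk1)
  - tau * Rs ^+ 2 * dot (zk1 - zh) (zk1 - zh) + tau * dot (g' - h) (g' - h).
  by rewrite /F /dot !(sumrB, big_split) /= !mulr_sumr.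
have F0 : forall i, 0 <= F i.
  move=> i.
  rewrite /F /zk1 /zh /beta Eb2 /lam /tau /Ahat !mxE.
  move: (g 0 i) (h 0 i) (g' 0 i) (zk 0 i) (z0 0 i) => G H G' Z Z0.
  have Q := @Q3_nonneg _ b ((alpha*Rs)^+2) G H G' b0 (sqr_ge0 _) small.
  have b2 : b + 2 != 0 by rewrite gt_eqF //; lra.
  set Qe := (X in 0 <= X) in Q.
  apply: le_trans (mulr_ge0 (ltW a0) Q) _.
  rewrite le_eqVlt; apply/orP; left; apply/eqP.
  rewrite /Qe; field; exact: b2.
have S0 : 0 <= \sum_i F i by apply: sumr_ge0 => i _; exact: F0.
rewrite SF in S0.
have lam0 : 0 <= lam by rewrite /lam mulr_ge0 //; lra.
have tau0 : 0 <= tau by rewrite /tau mulr_ge0 ?sqr_ge0 // ltW.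
have LM := mulr_ge0 lam0 M.
have LL : 0 <= tau * (Rs^+2 * dot (zk1 - zh) (zk1 - zh) - dot (g' - h) (g' - h)).
  by apply: mulr_ge0 => //; rewrite subr_ge0.
rewrite -/b.
clear F0 SF.
clearbody lam tau zk1 zh b.
move: S0 LM LL.
move: (dot g g) (dot g' g') (dot g (zk - z0)) (dot g' (zk1 - z0)) (dot g' (zk1 - zk))
  (dot g (zk - zk1)) (dot (zk1 - zh) (zk1 - zh)) (dot (g' - h) (g' - h)) => a1 a2 a3 a4 a5 a6 a7 a8.
move: (Ahat b) (Ahat (b + 1)) => c1 c2.
move=> S0 LM LL.
nra.
Qed.
Lemma final_scalar (R : realFieldType) (al Rs B A x S P D2 : R) :
  0 < al -> 0 < Rs -> al * Rs <= 1/7 -> 1 <= B -> B^+2/2 <= A -> 0 <= x -> 0 <= D2 ->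
  al * A * x + B * P <= al * (5/8) * Rs^+2 * D2 -> S <= P ->
  0 <= B * S + (al * A) / 2 * x + B^+2 / (2 * (al * A)) * D2 ->
  x <= 4 * (1 + al * Rs + al^+2 * Rs^+2) / (al^+2 * (1 + al * Rs)) * (D2 / B^+2).
Proof.
move=> a0 r0 ar B1 BA x0 D0 H1 H2 H3.
have B0 : 0 < B by lra.
have A0 : 0 < A by have := exprn_gt0 2 B0; lra.
have e0 : 0 < al * A by apply: mulr_gt0.
set e := al * A in H1 H3 e0.
have H2' : B * S <= B * P by rewrite ler_pM2l.
have H4 : e / 2 * x <= al * (5/8) * Rs^+2 * D2 + B^+2 / (2 * e) * D2 by lra.
have H5 : e ^+ 2 * x <= (5/4) * al * Rs^+2 * e * D2 + B^+2 * D2.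
  have := ler_pM2l (mulr_gt0 (ltr0n _ 2) e0) (e / 2 * x) (al * (5/8) * Rs^+2 * D2 + B^+2 / (2 * e) * D2).
  rewrite H4 => /esym/eqP/eqP/esym Hm.
  have E1 : 2 * e * (e / 2 * x) = e ^+ 2 * x by field; lra.
  have E2 : 2 * e * (al * (5/8) * Rs^+2 * D2 + B^+2 / (2 * e) * D2)
    = (5/4) * al * Rs^+2 * e * D2 + B^+2 * D2.
    by field; rewrite gt_eqF.
  by rewrite -E1 -E2 Hm.
have BD : D2 = (D2 / B^+2) * B^+2 by field; rewrite gt_eqF.
set W := D2 / B^+2 in BD *.
have W0 : 0 <= W by rewrite /W divr_ge0 // exprn_ge0 // ltW.
have al0 : al != 0 by rewrite gt_eqF.
have A0' : A != 0 by rewrite gt_eqF.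
have H7 : e^+2 * x <= e^+2 * ((5/2)*Rs^+2*W + 4*W/al^+2).
  apply: le_trans H5 _.
  rewrite -subr_ge0.
  have -> : e^+2 * ((5/2)*Rs^+2*W + 4*W/al^+2) - ((5/4) * al * Rs^+2 * e * D2 + B^+2 * D2)
    = (5/4)*al*Rs^+2*e*W*(2*A - B^+2) + W*(2*A - B^+2)*(2*A + B^+2).
    by rewrite BD /e; field.
  have h1 : 0 <= 2 * A - B^+2 by lra.
  have h2 : 0 <= 2 * A + B^+2 by have := exprn_ge0 2 (ltW B0); lra.
  have c54 : 0 <= 5/4 :> R by lra.
  have p1 : 0 <= (5/4)*al*Rs^+2*e*W.
    exact: mulr_ge0 (mulr_ge0 (mulr_ge0 (mulr_ge0 c54 (ltW a0)) (sqr_ge0 Rs)) (ltW e0)) W0.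
  apply: addr_ge0; [exact: mulr_ge0 p1 h1| exact: mulr_ge0 (mulr_ge0 W0 h1) h2].
have H8 : x <= (5/2)*Rs^+2*W + 4*W/al^+2.
  by move: H7; rewrite ler_pM2l // exprn_gt0.
apply: le_trans H8 _.
have -> : (5/2)*Rs^+2*W + 4*W/al^+2 = W * ((5/2)*Rs^+2 + 4/al^+2) by field.
rewrite [X in _ <= X]mulrC; apply: ler_wpM2l => //.
rewrite -subr_ge0.
have a1 : 0 < 1 + al * Rs by have := mulr_gt0 a0 r0; lra.
have -> : 4 * (1 + al * Rs + al^+2 * Rs^+2) / (al^+2 * (1 + al * Rs)) - ((5/2)*Rs^+2 + 4/al^+2)
  = Rs^+2 * (3/2 - 5/2 * (al * Rs)) / (1 + al * Rs).
  by field; rewrite gt_eqF.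
apply: divr_ge0; last exact: ltW.
by apply: mulr_ge0; [exact: sqr_ge0| lra].
Qed.

Lemma dotDr (R : realType) (n : nat) (a b c : 'rV[R]_n) :
  dot a (b + c) = dot a b + dot a c.
Proof. by rewrite /dot -big_split; apply: eq_bigr => i _; rewrite mxE mulrDr. Qed.

Lemma young (R : realType) (n : nat) (a d : 'rV[R]_n) (B e : R) : 0 < e ->
  0 <= B * dot a d + e / 2 * dot a a + B ^+ 2 / (2 * e) * dot d d.
Proof.
move=> e0.
have -> : B * dot a d + e / 2 * dot a a + B ^+ 2 / (2 * e) * dot d d =
  \sum_i (e / 2 * (a 0 i + B / e * d 0 i) ^+ 2).
  rewrite /dot !mulr_sumr -!big_split; apply: eq_bigr => i _ /=.
  by field; rewrite gt_eqF.
apply: sumr_ge0 => i _; apply: mulr_ge0; last exact: sqr_ge0.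
by apply: divr_ge0 => //; apply: ltW.
Qed.

Theorem theorem1 (R : realType) (n m : nat) (Rs : R)
  (L : 'rV[R]_(n + m) -> R) (zs : 'rV[R]_(n + m)) (alpha : R)
  (z0 : 'rV[R]_(n + m)) :
  0 < Rs ->
  smooth_cc Rs L ->
  convex_concave L ->
  saddle_point L zs ->
  0 < alpha ->
  0 <= 1 - 3 * alpha * Rs - alpha ^+ 2 * Rs ^+ 2 - alpha ^+ 3 * Rs ^+ 3 ->
  0 <= 1 - 8 * alpha * Rs + alpha ^+ 2 * Rs ^+ 2 - 2 * alpha ^+ 3 * Rs ^+ 3 ->
  forall k : nat,
    enorm (grad L (eagc L alpha z0 k)) ^+ 2
      <= 4 * (1 + alpha * Rs + alpha ^+ 2 * Rs ^+ 2)
           / (alpha ^+ 2 * (1 + alpha * Rs))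
         * (enorm (z0 - zs) ^+ 2 / (k.+1%:R) ^+ 2).
Proof.
move=> R0 sm cc sp a0 c1 c2 k.
have dL := sm.1.
have aR0 : 0 < alpha * Rs by apply: mulr_gt0.
have a7 : alpha * Rs <= 1/7.
  have E : 1 - 8 * alpha * Rs + alpha ^+ 2 * Rs ^+ 2 - 2 * alpha ^+ 3 * Rs ^+ 3
    = 1 - 8 * (alpha * Rs) + (alpha * Rs) ^+ 2 - 2 * (alpha * Rs) ^+ 3 by ring.
  rewrite E in c2; move: (alpha * Rs) aR0 c2 => a ha hc.
  nra.
have small : (alpha * Rs) ^+ 2 <= 1/49 by nra.
have Vdec : forall j, Vk L alpha z0 j <= Vk L alpha z0 0.
  elim=> [|j IH] //; exact: le_trans (@descent _ _ _ Rs L alpha z0 sm cc a0 small j) IH.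
have G0 := @G_saddle0 _ _ _ L zs dL sp.
have V0 : Vk L alpha z0 0 = alpha * (5/8) * dot (saddle_op L z0) (saddle_op L z0).
  rewrite /Vk /= subrr (@dotC _ _ _ 0) dot0l /Ahat mulr0 addr0.
  by congr (_ * _ * _); rewrite add0r; field.
have g0b : dot (saddle_op L z0) (saddle_op L z0) <= Rs^+2 * dot (z0 - zs) (z0 - zs).
  by have := @lip_sq _ _ _ Rs L z0 zs sm; rewrite G0 subr0.
set zk := eagc L alpha z0 k.
set g := saddle_op L zk.
have Hk : alpha * Ahat k%:R * dot g g + (k%:R + 1) * dot g (zk - z0)
   <= alpha * (5/8) * dot (saddle_op L z0) (saddle_op L z0).
  by rewrite -V0; exact: Vdec k.
have H1 : alpha * Ahat k%:R * dot g g + (k%:R + 1) * dot g (zk - z0)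
   <= alpha * (5/8) * Rs^+2 * dot (z0 - zs) (z0 - zs).
  apply: le_trans Hk _.
  have c0 : 0 <= alpha * (5/8) by apply: mulr_ge0; [apply: ltW|lra].
  by have := ler_wpM2l c0 g0b; rewrite !mulrA.
have H2 : dot g (zs - z0) <= dot g (zk - z0).
  have -> : zk - z0 = (zk - zs) + (zs - z0) by rewrite addrA subrK.
  rewrite [X in _ <= X]dotDr; have : 0 <= dot g (zk - zs) := @at_sol _ _ _ L zk zs dL cc sp.
  lra.
have b0 : 0 <= (k%:R : R) by rewrite ler0n.
have Apos : 0 < Ahat (k%:R : R) by rewrite /Ahat; apply: divr_gt0 => //; nra.
have H3 := @young _ _ g (zs - z0) (k%:R + 1) (alpha * Ahat k%:R) (mulr_gt0 a0 Apos).
have Ed : dot (zs - z0) (zs - z0) = dot (z0 - zs) (z0 - zs).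
  by rewrite -opprB dotNl dotNr opprK.
rewrite Ed in H3.
rewrite !enorm_sq -dot_G -[k.+1%:R]natr1.
apply: (@final_scalar _ alpha Rs (k%:R + 1) (Ahat k%:R) _ (dot g (zs - z0)) (dot g (zk - z0))) => //.
- by rewrite lerDr.
- by rewrite /Ahat; nra.
- exact: dot_ge0.
- exact: dot_ge0.
Qed.
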